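(* Let $n \ge 2$ be an integer, $\lambda > 0$ a real number, $C \ge 1$ and $m$ a positive integer with $m \le n+1$. There exists a constant $C'>0$ depending only on $n$, $m$ and $C$ such that the following holds. Let $(p_0,\ldots,p_n) \in \mathbb{Z}^{n+1}$ with $q := p_0 \ge 1$, $C^{-1} q \le |p_i| \le C q$ for all $i$, and $|p_{i-1}p_{i+1} - p_i^2| \le C q^{1-\lambda}$ for all $i \in \{1,\ldots,n-1\}$. For $i = 0,\ldots,n-m+1$ let $\mathbf{y}_i = (p_i, p_{i+1}, \ldots, p_{i+m-1}) \in \mathbb{Z}^m$. Then for any integers $c_1,\ldots,c_m \in \{0,\ldots,n-m+1\}$, the determinant $d(c_1,\ldots,c_m)$ of the $m\times m$ matrix with rows $\mathbf{y}_{c_1},\ldots,\mathbf{y}_{c_m}$ satisfies $|d(c_1,\ldots,c_m)| \le C' q^{1-(m-1)\lambda}$.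
   Context: The paper writes these statements with Vinogradov notation ($\ll$, $\asymp$); here implied constants are made explicit. *)

(* Defs.v *)
From mathcomp Require Import all_boot all_order all_algebra.
From mathcomp Require Import all_classical all_reals all_analysis.
Import Order.TTheory GRing.Theory Num.Theory.
Local Open Scope ring_scope.

Definition ymat (p : nat -> int) {m N : nat} (c : 'I_m -> 'I_N) : 'M[int]_m :=
  \matrix_(k < m, j < m) p ((c k : nat) + (j : nat))%N.

(* Main.v *)
From mathcomp Require Import all_boot all_order all_algebra.
From mathcomp Require Import all_classical all_reals all_analysis.
From mathcomp Require Import all_fingroup.
Require Import Defs.
From mathcomp Require Import zify ring lra.
Import Order.TTheory GRing.Theory Num.Theory.
Local Open Scope ring_scope.

Lemma det_bound (R : realType) m (A : 'M[R]_m) (b : 'I_m -> R) :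
  (forall i j, `|A i j| <= b j) -> `|\det A| <= m`!%:R * \prod_j b j.
Proof.
move=> hA; rewrite /determinant.
apply: le_trans (ler_norm_sum _ _ _) _.
apply: le_trans (_ : \sum_(s : 'S_m) \prod_j b j <= _).
  apply: ler_sum => s _.
  rewrite normrM normrX normrN normr1 expr1n mul1r normr_prod.
  rewrite (reindex_inj (@perm_inj _ s^-1)) /=.
  apply: ler_prod => i _; rewrite normr_ge0 /=.
  by rewrite permKV; apply: hA.
by rewrite sumr_const card_Sn mulr_natl.
Qed.

Lemma det_shift (R : realType) m (g : 'I_m -> nat -> R) (r : R) :
  \det (\matrix_(k, j) g k (j : nat)) = \det (\matrix_(k, j) (g k (j : nat) -
     (if (j : nat) is j'.+1 then r * g k j' else 0))).
Proof.
set M := \matrix_(k, j) g k (j : nat).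
pose U : 'M[R]_m := \matrix_(i, j) ((if (i : nat) == j then 1 else 0) - (if (i.+1 : nat) == j then r else 0)).
have dU : \det U = 1.
  rewrite -det_tr det_trig.
    by apply: big1 => i _; rewrite !mxE eqxx (gtn_eqF (ltnSn i)) subr0.
  apply/is_trig_mxP => i j lij; rewrite !mxE.
  by rewrite (gtn_eqF lij) (gtn_eqF (ltn_trans lij (ltnSn j))) subr0.
suff -> : \matrix_(k, j) (g k (j : nat) -
     (if (j : nat) is j'.+1 then r * g k j' else 0)) = M *m U.
  by rewrite det_mulmx dU mulr1.
apply/matrixP => k j.
rewrite !mxE /U /M.
under eq_bigr do rewrite !mxE mulrBr !(fun_if (fun x => g k _ * x)) mulr1 mulr0.
rewrite sumrB -big_mkcond /= -big_mkcond /= (big_pred1_eq _ j).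
congr (_ - _).
case: j => [[|j'] hj] /=.
  by rewrite big_pred0.
have hj' : (j' < m)%N by apply: ltnW.
by rewrite (big_pred1 (Ordinal hj')) /= 1?mulrC.
Qed.

Lemma div_le (R : realType) (x y X Y : R) :
  0 < Y -> Y <= `|y| -> `|x| <= X -> `|x / y| <= X / Y.
Proof.
move=> Y0 hY hX.
have y0 : 0 < `|y| by apply: lt_le_trans hY.
rewrite normrM normfV; apply: ler_pM.
- exact: normr_ge0.
- by rewrite invr_ge0 ltW.
- exact: hX.
- by rewrite lef_pV2 // posrE.
Qed.

Theorem proposition4p3 (R : realType) (n m : nat) (C : R) :
  (2 <= n)%N -> 1 <= C -> (0 < m)%N -> (m <= n.+1)%N ->
  exists C' : R, 0 < C' /\
  forall (lam : R) (p : nat -> int),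
    0 < lam ->
    (1 <= p 0%N)%R ->
    (forall i : nat, (i <= n)%N ->
        C^-1 * (p 0%N)%:~R <= `|(p i)%:~R| :> R /\
        `|(p i)%:~R| <= C * (p 0%N)%:~R :> R) ->
    (forall i : nat, (1 <= i)%N -> (i <= n.-1)%N ->
        `|(p i.-1 * p i.+1 - p i ^+ 2)%:~R| <= C * ((p 0%N)%:~R `^ (1 - lam)) :> R) ->
    forall c : 'I_m -> 'I_(n - m + 2),
      `|(\det (ymat p c))%:~R| <= C' * ((p 0%N)%:~R `^ (1 - (m%:R - 1) * lam)) :> R.
Proof.
move=> hn hC hm hmn.
have C0 : 0 < C by apply: lt_le_trans hC.
exists (m`!%:R * C * (n%:R * C^+4)^+m.-1); split.
  apply: mulr_gt0; first by apply: mulr_gt0 => //; rewrite ltr0n fact_gt0.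
  by apply: exprn_gt0; apply: mulr_gt0; [rewrite ltr0n; apply: leq_trans hn|apply: exprn_gt0].
move=> lam p hlam hp0 hb hd c.
set q : R := (p 0%N)%:~R.
have q1 : 1 <= q by rewrite /q ler1z.
have q0 : 0 < q by apply: lt_le_trans q1.
set dl := q `^ (- lam).
have dl0 : 0 <= dl by apply: powR_ge0.
have hpow : q `^ (1 - lam) = q * dl.
  by rewrite powRD ?powRr1 ?(ltW q0) //; apply/implyP => _; rewrite gt_eqF.
have hpow2 : q `^ (1 - (m%:R - 1) * lam) = q * dl ^+ m.-1.
  have -> : 1 - (m%:R - 1) * lam = 1 + (- lam) * (m.-1)%:R.
    by rewrite -{1}(prednK hm) -natr1 addrK mulNr mulrC.
  rewrite powRD ?powRr1 ?(ltW q0) ?powRrM ?powR_mulrn //.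
  by apply/implyP => _; rewrite gt_eqF.
rewrite hpow2.
have Cp0 : 0 <= m`!%:R * C * (n%:R * C^+4)^+m.-1.
  by rewrite !mulr_ge0 ?exprn_ge0 ?mulr_ge0 ?exprn_ge0 ?ler0n ?ltW.
case: (ltnP n m) => hmn'.
  (* m = n.+1 : two equal rows *)
  have -> : \det (ymat p c) = 0.
    case: (boolP (injectiveb c)) => [/injectiveP inj | /injectivePn [k1 [k2 hk he]]].
      have := leq_card c inj; rewrite !card_ord => h.
      exfalso; lia.
    apply: (determinant_alternate hk) => j; rewrite !mxE he //.
  by rewrite mulr0z normr0 (mulr_ge0 Cp0 (mulr_ge0 (ltW q0) (exprn_ge0 _ dl0))).
set a : nat -> R := fun i => (p i)%:~R.
have ha : forall i, (i <= n)%N -> C^-1 * q <= `|a i| /\ `|a i| <= C * q := hb.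
have hlo0 : 0 < C^-1 * q by rewrite mulr_gt0 // invr_gt0.
have anz : forall i, (i <= n)%N -> a i != 0.
  by move=> i hi; rewrite -normr_gt0; exact: lt_le_trans hlo0 (ha i hi).1.
set rr := fun t => a t.+1 / a t.
have hstep : forall t, (t.+2 <= n)%N -> `|rr t.+1 - rr t| <= C^+3 * dl / q.
  move=> t ht.
  have ht0 : (t <= n)%N by lia.
  have ht1 : (t.+1 <= n)%N by lia.
  have at0 : a t != 0 by apply: anz.
  have at1 : a t.+1 != 0 by apply: anz.
  have e : rr t.+1 - rr t = (a t * a t.+2 - a t.+1 ^+ 2) / (a t * a t.+1).
    by rewrite /rr /=; field; apply/andP; split.
  rewrite e.
  have -> : C^+3 * dl / q = (C * (q * dl)) / ((C^-1 * q) * (C^-1 * q)).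
    by field; rewrite ?gt_eqF.
  apply: div_le.
  - by rewrite mulr_gt0.
  - rewrite normrM; apply: ler_pM; [exact: ltW hlo0 | exact: ltW hlo0 | exact: (ha t ht0).1 | exact: (ha t.+1 ht1).1].
  - have htn : (t.+1 <= n.-1)%N by rewrite -subn1; lia.
    have := hd t.+1 isT htn.
    by rewrite -hpow /= intrB !intrM.
have hrr : forall t, (t < n)%N -> `|rr t - rr 0%N| <= t%:R * (C^+3 * dl / q).
  elim=> [|t IH] ht; first by rewrite subrr normr0 mul0r.
  have ht' : (t < n)%N by lia.
  have ht2 : (t.+2 <= n)%N by lia.
  rewrite -natr1 mulrDl mul1r.
  have -> : rr t.+1 - rr 0%N = (rr t - rr 0%N) + (rr t.+1 - rr t) by ring.
  apply: le_trans (ler_normD _ _) _.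
  by apply: lerD; [apply: IH | apply: hstep].
have hC4 : 0 <= C ^+ 4 by rewrite exprn_ge0 // ltW.
have hkey : forall t, (t < n)%N -> `|a t.+1 - rr 0%N * a t| <= n%:R * C^+4 * dl.
  move=> t ht.
  have ht0 : (t <= n)%N by lia.
  have at0 : a t != 0 by apply: anz.
  have a00 : a 0%N != 0 by apply: anz.
  have -> : a t.+1 - rr 0%N * a t = (rr t - rr 0%N) * a t.
    by rewrite /rr /=; field; do ?[apply/andP; split]; assumption.
  rewrite normrM.
  apply: le_trans (_ : t%:R * (C^+3 * dl / q) * (C * q) <= _).
    apply: ler_pM; [exact: normr_ge0 | exact: normr_ge0 | exact: hrr | exact: (ha t ht0).2].
  have -> : t%:R * (C^+3 * dl / q) * (C * q) = t%:R * C^+4 * dl.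
    by field; rewrite gt_eqF.
  by apply: (ler_wpM2r dl0); apply: (ler_wpM2r hC4); rewrite ler_nat ltnW.
have Mdef : (\det (ymat p c))%:~R =
    \det (\matrix_(k, j) (fun (k : 'I_m) (t : nat) => a (c k + t)%N) k (j : nat)).
  rewrite -(det_map_mx (intmul (1:R))).
  by congr (\det _); apply/matrixP => k j; rewrite !mxE.
rewrite Mdef (@det_shift R m (fun (k : 'I_m) (t : nat) => a (c k + t)%N) (rr 0%N)).
pose b := fun j : 'I_m => if (j : nat) == 0%N then C * q else n%:R * C^+4 * dl.
apply: le_trans (@det_bound R m _ b _) _.
  move=> k j; rewrite mxE /b.
  have hck := ltn_ord (c k).
  case: j => [[|j'] hj] /=.
    rewrite subr0 addn0; apply: (ha _ _).2; lia.
  rewrite addnS; apply: hkey; lia.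
rewrite (bigD1 (Ordinal hm)) //=.
rewrite (eq_bigr (fun _ => n%:R * C^+4 * dl)); last first.
  move=> j hj; rewrite /b ifF //; apply: contraNF hj => /eqP h.
  by apply/eqP/val_inj.
rewrite prodr_const cardC1 card_ord /b /=.
rewrite le_eqVlt; apply/orP; left; apply/eqP; rewrite !exprMn; ring.
Qed.
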